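(* Let $Q$ be a deterministic query in $\mathcal{L}^{\mathrm{query}}$. Then $\mathcal{R}^{\mathrm{query}}_{\Sigma,\mathcal{D}}(Q)$ is confluent; in particular, for every ground multiset of facts $F$ there is a unique multiset of facts $F'$ such that $\mathrm{Init}_Q(F)\rightarrow^!\mathrm{Ans}(F')$.
   Context: Setting: $\Sigma$ is a signature of facts containing sorts $\mathsf{Fact}$ and $\mathsf{Bool}$, and $\mathcal{D}$ is a $\Sigma$-algebra of facts. Databases are finite multisets of facts (associative-commutative $\circ$ with identity $\emptyset$). Patterns are multisets of facts wrapped by modalities $[\_]_!$ (kept) and $[\_]_?$ (considered at most once per quantifier evaluation, not removed) (plus $[\_]_0$ and fresh-fact modalities not used in queries). Conditions are built from $\mathsf{False}$, $\{B\}$, negation, disjunction and $\exists P.\psi$. Queries of $\mathcal{L}^{\mathrm{query}}$ are built from $\emptyset$, facts, union $Q\oplus Q'$, conditionals $\phi\Rightarrow Q$ and iteration $\mathrm{from}\ P.Q$, where quantification patterns use only $[\_]_!$ and $[\_]_?$ and contain at least one $[\_]_?$ fact. $\mathcal{R}^{\mathrm{query}}_{\Sigma,\mathcal{D}}(Q)$ is the terminating rewriting system evaluating $Q$: it rewrites $\mathrm{Init}_Q(F)=\{F,\emptyset,[\,]_Q\}^q$ (database, partial answer, stack of evaluation frames) to normal forms $\mathrm{Ans}(F')$ whose argument is a query answer; $\mathrm{from}\ P.R$ is evaluated by repeatedly (non-deterministically) matching the pattern facts against an iterator state, removing matched $[\_]_?$ facts, evaluating $R$ under the matching substitution and adding its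 results. A fully reduced term $t:\mathsf{Fact}$ has the unique matching property if for every ground fully reduced $t':\mathsf{Fact}$ there is at most one substitution $\sigma$ with $\sigma(t)=_A t'$ (equality modulo equational attributes). A query is deterministic if all quantification patterns in it (including those inside its conditions) contain only single facts having the unique matching property. *)

(* Defs.v *)
From Stdlib Require Import List Permutation Relations.
Import ListNotations.
Set Implicit Arguments.

(* The ambient setting: Sigma-terms modulo the equational attributes A      *)
(* (Leibniz equality on [Tm] IS equality modulo A), with variables,         *)
(* substitution and the full reduction [red] of the algebra of facts D.     *)
Record FactSetting := {
  Var : Type;
  Tm : Type;
  tvar : Var -> Tm;
  subst : (Var -> Tm) -> Tm -> Tm;
  occurs : Var -> Tm -> Prop;
  isFact : Tm -> Prop;
  red : Tm -> Tm;
  ttrue : Tm;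
  subst_var : forall s x, subst s (tvar x) = s x;
  occurs_var : forall x y, occurs y (tvar x) <-> y = x;
  subst_comp : forall s s' t,
      subst s (subst s' t) = subst (fun x => subst s (s' x)) t;
  subst_ext : forall s s' t,
      (forall x, occurs x t -> s x = s' x) -> subst s t = subst s' t;
  occurs_subst : forall s t y,
      occurs y (subst s t) <-> exists x, occurs x t /\ occurs y (s x);
  red_idem : forall t, red (red t) = red t
}.

Arguments tvar {f} x.
Arguments subst {f} s t.
Arguments occurs {f} x t.
Arguments isFact {f} t.
Arguments red {f} t.
Arguments ttrue {f}.

Section Queries.
Context {S : FactSetting}.

Notation Tm := (Tm S).
Notation Var := (Var S).

Definition ground (t : Tm) : Prop := forall x, ~ occurs x t.
Definition fully_reduced (t : Tm) : Prop := red t = t.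

(* Databases / answers: finite multisets of facts, as lists up to Permutation *)
Definition db := list Tm.

(* Modalities usable in query patterns: [_]_! (keep) and [_]_? (once). *)
Inductive modality := MKeep | MOnce.
Definition pattern := list (modality * Tm).

Inductive query :=
| QEmpty
| QFact (t : Tm)
| QUnion (q1 q2 : query)
| QIf (c : cond) (q : query)
| QFrom (P : pattern) (r : query)
with cond :=
| CFalse
| CBool (b : Tm)
| CNot (c : cond)
| COr (c1 c2 : cond)
| CEx (P : pattern) (c : cond).

Definition substP (s : Var -> Tm) (P : pattern) : pattern :=
  map (fun p => (fst p, subst s (snd p))) P.

Fixpoint substQ (s : Var -> Tm) (q : query) : query :=
  match q with
  | QEmpty => QEmpty
  | QFact t => QFact (subst s t)
  | QUnion q1 q2 => QUnion (substQ s q1) (substQ s q2)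
  | QIf c q => QIf (substC s c) (substQ s q)
  | QFrom P r => QFrom (substP s P) (substQ s r)
  end
with substC (s : Var -> Tm) (c : cond) : cond :=
  match c with
  | CFalse => CFalse
  | CBool b => CBool (subst s b)
  | CNot c => CNot (substC s c)
  | COr c1 c2 => COr (substC s c1) (substC s c2)
  | CEx P c => CEx (substP s P) (substC s c)
  end.

Definition qpat_ok (P : pattern) : Prop := exists t, In (MOnce, t) P.

Fixpoint in_Lquery (q : query) : Prop :=
  match q with
  | QEmpty | QFact _ => True
  | QUnion q1 q2 => in_Lquery q1 /\ in_Lquery q2
  | QIf c q => in_Lcond c /\ in_Lquery q
  | QFrom P r => qpat_ok P /\ in_Lquery r
  end
with in_Lcond (c : cond) : Prop :=
  match c with
  | CFalse | CBool _ => True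
  | CNot c => in_Lcond c
  | COr c1 c2 => in_Lcond c1 /\ in_Lcond c2
  | CEx P c => qpat_ok P /\ in_Lcond c
  end.

Definition unique_matching (t : Tm) : Prop :=
  isFact t /\ fully_reduced t /\
  forall t', ground t' -> fully_reduced t' -> isFact t' ->
  forall s1 s2 : Var -> Tm, subst s1 t = t' -> subst s2 t = t' ->
  forall x, occurs x t -> s1 x = s2 x.

Definition det_pattern (P : pattern) : Prop :=
  exists m t, P = [(m, t)] /\ unique_matching t.

Fixpoint deterministic (q : query) : Prop :=
  match q with
  | QEmpty | QFact _ => True
  | QUnion q1 q2 => deterministic q1 /\ deterministic q2
  | QIf c q => deterministic_cond c /\ deterministic q
  | QFrom P r => det_pattern P /\ deterministic r
  end
with deterministic_cond (c : cond) : Prop :=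
  match c with
  | CFalse | CBool _ => True
  | CNot c => deterministic_cond c
  | COr c1 c2 => deterministic_cond c1 /\ deterministic_cond c2
  | CEx P c => det_pattern P /\ deterministic_cond c
  end.

Definition occursP (x : Var) (P : pattern) : Prop :=
  exists p, In p P /\ occurs x (snd p).

Fixpoint kept (P : pattern) (ms : list Tm) : list Tm :=
  match P, ms with
  | (MKeep, _) :: P', u :: ms' => u :: kept P' ms'
  | (MOnce, _) :: P', _ :: ms' => kept P' ms'
  | _, _ => []
  end.

Definition matches (P : pattern) (I : db) (s : Var -> Tm) (I' : db) : Prop :=
  (forall x, ~ occursP x P -> s x = tvar x) /\
  (forall x, occursP x P -> ground (s x)) /\
  exists ms rest, Permutation I (ms ++ rest) /\
    Forall2 (fun p u => subst s (snd p) = u) P ms /\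
    I' = kept P ms ++ rest.

(* The rewriting system R^query(Q): states {F, answer, stack}^q and Ans(F')  *)
Inductive frame :=
| KQ (q : query)
| KIter (P : pattern) (r : query) (I : db)
| KIf (q : query)                         (* awaiting a Boolean for (_ => q) *)
| KC (c : cond)
| KNot
| KOr (c : cond)                          (* awaiting left disjunct *)
| KEx (P : pattern) (c : cond) (I : db)
| KExW (P : pattern) (c : cond) (I : db)  (* awaiting value of an instance *)
| KVal (b : bool).

Inductive state :=
| Run (F : db) (acc : db) (stk : list frame)
| Ans (F' : db).

Definition Init (Q : query) (F : db) : state := Run F [] [KQ Q].

Inductive step : state -> state -> Prop :=
| st_empty F a s : step (Run F a (KQ QEmpty :: s)) (Run F a s)
| st_fact F a s t : step (Run F a (KQ (QFact t) :: s)) (Run F (red t :: a) s)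
| st_union F a s q1 q2 :
    step (Run F a (KQ (QUnion q1 q2) :: s)) (Run F a (KQ q1 :: KQ q2 :: s))
| st_if F a s c q : step (Run F a (KQ (QIf c q) :: s)) (Run F a (KC c :: KIf q :: s))
| st_from F a s P r : step (Run F a (KQ (QFrom P r) :: s)) (Run F a (KIter P r F :: s))
| st_iter F a s P r I sg I' : matches P I sg I' ->
    step (Run F a (KIter P r I :: s)) (Run F a (KQ (substQ sg r) :: KIter P r I' :: s))
| st_iter_end F a s P r I : ~ (exists sg I', matches P I sg I') ->
    step (Run F a (KIter P r I :: s)) (Run F a s)
| st_if_true F a s q : step (Run F a (KVal true :: KIf q :: s)) (Run F a (KQ q :: s))
| st_if_false F a s q : step (Run F a (KVal false :: KIf q :: s)) (Run F a s)
| st_false F a s : step (Run F a (KC CFalse :: s)) (Run F a (KVal false :: s))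
| st_bool_true F a s b : red b = ttrue ->
    step (Run F a (KC (CBool b) :: s)) (Run F a (KVal true :: s))
| st_bool_false F a s b : red b <> ttrue ->
    step (Run F a (KC (CBool b) :: s)) (Run F a (KVal false :: s))
| st_not F a s c : step (Run F a (KC (CNot c) :: s)) (Run F a (KC c :: KNot :: s))
| st_not_val F a s b : step (Run F a (KVal b :: KNot :: s)) (Run F a (KVal (negb b) :: s))
| st_or F a s c1 c2 : step (Run F a (KC (COr c1 c2) :: s)) (Run F a (KC c1 :: KOr c2 :: s))
| st_or_true F a s c : step (Run F a (KVal true :: KOr c :: s)) (Run F a (KVal true :: s))
| st_or_false F a s c : step (Run F a (KVal false :: KOr c :: s)) (Run F a (KC c :: s))
| st_ex F a s P c : step (Run F a (KC (CEx P c) :: s)) (Run F a (KEx P c F :: s))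
| st_ex_try F a s P c I sg I' : matches P I sg I' ->
    step (Run F a (KEx P c I :: s)) (Run F a (KC (substC sg c) :: KExW P c I' :: s))
| st_ex_none F a s P c I : ~ (exists sg I', matches P I sg I') ->
    step (Run F a (KEx P c I :: s)) (Run F a (KVal false :: s))
| st_exw_true F a s P c I :
    step (Run F a (KVal true :: KExW P c I :: s)) (Run F a (KVal true :: s))
| st_exw_false F a s P c I :
    step (Run F a (KVal false :: KExW P c I :: s)) (Run F a (KEx P c I :: s))
| st_done F a : step (Run F a []) (Ans a).

Definition steps : state -> state -> Prop := clos_refl_trans state step.
Definition normal_form (s : state) : Prop := ~ exists t, step s t.
Definition steps_nf (s t : state) : Prop := steps s t /\ normal_form t.

(* Equality of states modulo the associativity/commutativity of multisets *)
Inductive frame_equiv : frame -> frame -> Prop :=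
| fe_refl f : frame_equiv f f
| fe_iter P r I I' : Permutation I I' -> frame_equiv (KIter P r I) (KIter P r I')
| fe_ex P c I I' : Permutation I I' -> frame_equiv (KEx P c I) (KEx P c I')
| fe_exw P c I I' : Permutation I I' -> frame_equiv (KExW P c I) (KExW P c I').

Inductive state_equiv : state -> state -> Prop :=
| se_run F F' a a' s s' : Permutation F F' -> Permutation a a' ->
    Forall2 frame_equiv s s' -> state_equiv (Run F a s) (Run F' a' s')
| se_ans a a' : Permutation a a' -> state_equiv (Ans a) (Ans a').

Definition confluent_from (s : state) : Prop :=
  forall u v, steps s u -> steps s v ->
  exists w1 w2, steps u w1 /\ steps v w2 /\ state_equiv w1 w2.

Definition ground_db (F : db) : Prop :=
  Forall (fun t => ground t /\ fully_reduced t /\ isFact t) F.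

End Queries.

(* Main.v *)
Require Import Defs.
From Stdlib Require Import List Permutation Relations Classical FunctionalExtensionality Lia Wf_nat.
Import ListNotations.
Set Implicit Arguments.

Section Dev.
Context {Sig : FactSetting}.
Notation Tm := (Tm Sig).
Notation Var := (Var Sig).

Definition goodT (t : Tm) := ground t /\ fully_reduced t /\ isFact t.
Definition UM (t : Tm) := forall t', goodT t' -> forall s1 s2, subst s1 t = t' -> subst s2 t = t' ->
  forall x, occurs x t -> s1 x = s2 x.
Definition goodP (P : @pattern Sig) := exists t, P = [(MOnce, t)] /\ UM t.
Fixpoint GQ (q : @query Sig) : Prop :=
  match q with
  | QEmpty | QFact _ => True
  | QUnion q1 q2 => GQ q1 /\ GQ q2
  | QIf c q => GC c /\ GQ q
  | QFrom P r => goodP P /\ GQ r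
  end
with GC (c : @cond Sig) : Prop :=
  match c with
  | CFalse | CBool _ => True
  | CNot c => GC c
  | COr c1 c2 => GC c1 /\ GC c2
  | CEx P c => goodP P /\ GC c
  end.
Definition nice (s : Var -> Tm) := forall x, ground (s x) \/ s x = tvar x.

Fixpoint qsize (q : @query Sig) : nat :=
  match q with
  | QEmpty | QFact _ => 1
  | QUnion a b => 1 + (qsize a + qsize b)
  | QIf c q => 1 + (csize c + qsize q)
  | QFrom P r => 1 + qsize r
  end
with csize (c : @cond Sig) : nat :=
  match c with
  | CFalse | CBool _ => 1
  | CNot c => 1 + csize c
  | COr a b => 1 + (csize a + csize b)
  | CEx P c => 1 + csize c
  end.

Scheme query_mind := Induction for query Sort Prop
  with cond_mind := Induction for cond Sort Prop.
Combined Scheme qc_mind from query_mind, cond_mind.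

Lemma size_subst s : (forall q, qsize (substQ s q) = qsize q) /\ (forall c, csize (substC s c) = csize c).
Proof. apply qc_mind; intros; simpl; auto; lia. Qed.

Lemma size_pos : (forall q : @query Sig, 1 <= qsize q) /\ (forall c : @cond Sig, 1 <= csize c).
Proof. split; intros []; simpl; lia. Qed.

Lemma UM_subst t s : UM t -> nice s -> UM (subst s t).
Proof.
  intros HU Hn t' Ht' s1 s2 E1 E2 y Hy.
  rewrite subst_comp in E1, E2.
  apply occurs_subst in Hy. destruct Hy as [x [Hx Hy]].
  pose proof (HU t' Ht' _ _ E1 E2 x Hx) as Hxx. simpl in Hxx.
  destruct (Hn x) as [G|G].
  - exfalso; exact (G y Hy).
  - rewrite G in Hy, Hxx. apply occurs_var in Hy. subst y.
    rewrite !subst_var in Hxx. exact Hxx.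
Qed.

Lemma goodP_subst P s : goodP P -> nice s -> goodP (substP s P).
Proof.
  intros [t [-> HU]] Hn. exists (subst s t); split; [reflexivity|].
  apply UM_subst; auto.
Qed.

Lemma G_subst s : nice s -> (forall q, GQ q -> GQ (substQ s q)) /\ (forall c, GC c -> GC (substC s c)).
Proof.
  intros Hn; apply qc_mind; intros; simpl in *; try tauto;
  try (destruct H1; split; auto); try (destruct H0; split; auto using goodP_subst).
Qed.

Lemma occursP1 x (t : Tm) : @occursP Sig x [(MOnce, t)] <-> occurs x t.
Proof.
  split.
  - intros [p [[<-|[]] H]]; exact H.
  - intros H; exists (MOnce, t); simpl; auto.
Qed.

Lemma matches1 (t : Tm) (I : list Tm) (sg : Var -> Tm) (I' : list Tm) : matches [(MOnce, t)] I sg I' <->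
  ((forall x, ~ occurs x t -> sg x = tvar x) /\ (forall x, occurs x t -> ground (sg x)) /\
   Permutation I (subst sg t :: I')).
Proof.
  split.
  - intros [H1 [H2 [ms [rest [Hp [Hf ->]]]]]].
    inversion Hf as [|p u P0 ms0 Hpu Hrest]; subst. inversion Hrest; subst. simpl in *.
    split; [intros x Hx; apply H1; intro Hc; apply occursP1 in Hc; auto|].
    split; [intros x Hx; apply H2; apply occursP1; auto|]. exact Hp.
  - intros [H1 [H2 H3]]. split; [intros x Hx; apply H1; intro Hc; apply occursP1 in Hc; auto|].
    split; [intros x Hx; apply H2; apply occursP1 in Hx; auto|].
    exists [subst sg t], I'. split; [exact H3|]. split; [constructor; auto|reflexivity].
Qed.

Lemma matches_nice (P : @pattern Sig) I sg I' : matches P I sg I' -> nice sg.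
Proof.
  intros [H1 [H2 _]] x. destruct (classic (occursP x P)); [left; auto|right; auto].
Qed.

Lemma matches_perm (P : @pattern Sig) I J sg I' : matches P I sg I' -> Permutation I J -> matches P J sg I'.
Proof.
  intros [H1 [H2 [ms [rest [Hp Hr]]]]] HJ. split; auto. split; auto.
  exists ms, rest. split; auto. eapply Permutation_trans; [apply Permutation_sym; exact HJ| exact Hp].
Qed.

Lemma sg_unique (t : Tm) (sg1 sg2 : Var -> Tm) : UM t -> goodT (subst sg1 t) -> subst sg1 t = subst sg2 t ->
  (forall x, ~ occurs x t -> sg1 x = tvar x) -> (forall x, ~ occurs x t -> sg2 x = tvar x) -> sg1 = sg2.
Proof.
  intros HU Hg E H1 H2. apply functional_extensionality; intros x.
  destruct (classic (occurs x t)).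
  - eapply HU; eauto.
  - rewrite H1, H2; auto.
Qed.

Lemma swap (I I0 I' : list Tm) u0 u : Permutation I (u0 :: I0) -> Permutation I (u :: I') -> u0 <> u ->
  exists J, Permutation I0 (u :: J) /\ Permutation I' (u0 :: J).
Proof.
  intros H0 H1 Hne.
  assert (Hin : In u (u0 :: I0)). { eapply Permutation_in; [exact H0|]. eapply Permutation_in; [apply Permutation_sym; exact H1| left; auto]. }
  destruct Hin as [E|Hin]; [congruence|].
  apply in_split in Hin. destruct Hin as [l1 [l2 ->]].
  exists (l1 ++ l2). split.
  - apply Permutation_sym, Permutation_middle.
  - apply Permutation_cons_inv with u.
    eapply Permutation_trans; [apply Permutation_sym; exact H1|].
    eapply Permutation_trans; [exact H0|].
    eapply Permutation_trans; [apply Permutation_cons; [reflexivity| apply Permutation_sym, Permutation_middle]|].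
    apply perm_swap.
Qed.

Lemma forall_perm (I J : list Tm) : Forall goodT I -> Permutation I J -> Forall goodT J.
Proof. intros H P; exact (Permutation_Forall P H). Qed.


Definition NM (P : @pattern Sig) (I : list Tm) := ~ (exists sg I', matches P I sg I').

Inductive evalQ (F : @db Sig) : @query Sig -> @db Sig -> Prop :=
| eq_empty : evalQ F QEmpty []
| eq_fact t : evalQ F (QFact t) [red t]
| eq_union q1 q2 o1 o2 : evalQ F q1 o1 -> evalQ F q2 o2 -> evalQ F (QUnion q1 q2) (o2 ++ o1)
| eq_if_t c q o : evalC F c true -> evalQ F q o -> evalQ F (QIf c q) o
| eq_if_f c q : evalC F c false -> evalQ F (QIf c q) []
| eq_from P r o : evalIt F P r F o -> evalQ F (QFrom P r) o
with evalIt (F : @db Sig) : @pattern Sig -> @query Sig -> @db Sig -> @db Sig -> Prop :=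
| ei_end P r I : goodP P -> Forall goodT I -> Forall goodT F -> NM P I -> evalIt F P r I []
| ei_step P r I sg I' o1 o2 : goodP P -> Forall goodT I -> Forall goodT F ->
    matches P I sg I' -> evalQ F (substQ sg r) o1 -> evalIt F P r I' o2 -> evalIt F P r I (o2 ++ o1)
with evalC (F : @db Sig) : @cond Sig -> bool -> Prop :=
| ec_false : evalC F CFalse false
| ec_bt b : red b = ttrue -> evalC F (CBool b) true
| ec_bf b : red b <> ttrue -> evalC F (CBool b) false
| ec_not c b : evalC F c b -> evalC F (CNot c) (negb b)
| ec_or_t c1 c2 : evalC F c1 true -> evalC F (COr c1 c2) true
| ec_or_f c1 c2 b : evalC F c1 false -> evalC F c2 b -> evalC F (COr c1 c2) b
| ec_ex P c b : evalEx F P c F b -> evalC F (CEx P c) b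
with evalEx (F : @db Sig) : @pattern Sig -> @cond Sig -> @db Sig -> bool -> Prop :=
| ex_none P c I : goodP P -> GC c -> Forall goodT I -> Forall goodT F -> NM P I -> evalEx F P c I false
| ex_t P c I sg I' : goodP P -> GC c -> Forall goodT I -> Forall goodT F ->
    matches P I sg I' -> evalC F (substC sg c) true -> evalEx F P c I true
| ex_f P c I sg I' b : goodP P -> GC c -> Forall goodT I -> Forall goodT F ->
    matches P I sg I' -> evalC F (substC sg c) false -> evalEx F P c I' b -> evalEx F P c I b.

Lemma NM_perm P I J : NM P I -> Permutation I J -> NM P J.
Proof.
  intros H HP [sg [I' Hm]]. apply H. exists sg, I'. eapply matches_perm; [exact Hm|]. apply Permutation_sym; auto.
Qed.

Lemma evalIt_perm F P r I J o : evalIt F P r I o -> Permutation I J -> evalIt F P r J o.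
Proof.
  intros H HP. inversion H; subst.
  - apply ei_end; eauto using forall_perm, NM_perm.
  - eapply ei_step; eauto using forall_perm, matches_perm.
Qed.

Lemma evalEx_perm F P c I J b : evalEx F P c I b -> Permutation I J -> evalEx F P c J b.
Proof.
  intros H HP. inversion H; subst.
  - apply ex_none; eauto using forall_perm, NM_perm.
  - eapply ex_t; eauto using forall_perm, matches_perm.
  - eapply ex_f; eauto using forall_perm, matches_perm.
Qed.

Lemma matches_len P I sg I' : goodP P -> matches P I sg I' -> length I' < length I.
Proof.
  intros [t [-> _]] Hm. apply matches1 in Hm. destruct Hm as [_ [_ Hp]].
  apply Permutation_length in Hp. simpl in Hp. lia.
Qed.



Lemma match_cases P I sg0 I0 sg I' : goodP P -> Forall goodT I -> matches P I sg0 I0 -> matches P I sg I' ->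
  (sg0 = sg /\ Permutation I0 I') \/
  (exists J, matches P I0 sg J /\ matches P I' sg0 J /\ Forall goodT I0 /\ Forall goodT I').
Proof.
  intros [t [-> HU]] HI H0 H1.
  pose proof H0 as H0'. pose proof H1 as H1'.
  apply matches1 in H0. apply matches1 in H1.
  destruct H0 as [A0 [B0 P0]]. destruct H1 as [A1 [B1 P1]].
  assert (G0 : Forall goodT I0). { pose proof (forall_perm HI P0) as GG; inversion GG; auto. }
  assert (G1 : Forall goodT I'). { pose proof (forall_perm HI P1) as GG; inversion GG; auto. }
  destruct (classic (subst sg0 t = subst sg t)) as [E|NE].
  - left. assert (sg0 = sg).
    { eapply sg_unique; eauto. pose proof (forall_perm HI P0) as GG; inversion GG; auto. }
    subst sg0. split; auto. apply Permutation_cons_inv with (subst sg t).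
    eapply Permutation_trans; [apply Permutation_sym; exact P0| exact P1].
  - right. destruct (swap P0 P1 NE) as [J [PJ0 PJ1]].
    exists J. split; [apply matches1; auto|]. split; [apply matches1; auto|]. auto.
Qed.


Lemma iter_total F P r : goodP P -> Forall goodT F ->
  (forall sg I I', matches P I sg I' -> exists o, evalQ F (substQ sg r) o) ->
  forall I, Forall goodT I -> exists o, evalIt F P r I o.
Proof.
  intros HP HF Hb I. induction I as [I IH] using (induction_ltof1 _ (@length _)). intros HI.
  destruct (classic (exists sg I', matches P I sg I')) as [[sg [I' Hm]]|Hn].
  - destruct (Hb _ _ _ Hm) as [o1 H1].
    destruct (match_cases HP HI Hm Hm) as [_|[J [_ [_ [G0 _]]]]]; [|].
    + assert (GI' : Forall goodT I').
      { destruct HP as [t [-> _]]. apply matches1 in Hm. destruct Hm as [_ [_ Hp]].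
        pose proof (forall_perm HI Hp) as GG; inversion GG; auto. }
      destruct (IH I') as [o2 H2]; [unfold ltof; eapply matches_len; eauto| auto|].
      exists (o2 ++ o1). eapply ei_step; eauto.
    + destruct (IH I') as [o2 H2]; [unfold ltof; eapply matches_len; eauto| auto|].
      exists (o2 ++ o1). eapply ei_step; eauto.
  - exists []. apply ei_end; auto.
Qed.

Lemma ex_total F P c : goodP P -> GC c -> Forall goodT F ->
  (forall sg I I', matches P I sg I' -> exists b, evalC F (substC sg c) b) ->
  forall I, Forall goodT I -> exists b, evalEx F P c I b.
Proof.
  intros HP HC HF Hb I. induction I as [I IH] using (induction_ltof1 _ (@length _)). intros HI.
  destruct (classic (exists sg I', matches P I sg I')) as [[sg [I' Hm]]|Hn].
  - destruct (Hb _ _ _ Hm) as [b0 H0].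
    destruct b0.
    + exists true. eapply ex_t; eauto.
    + assert (GI' : Forall goodT I').
      { destruct HP as [t [-> _]]. apply matches1 in Hm. destruct Hm as [_ [_ Hp]].
        pose proof (forall_perm HI Hp) as GG; inversion GG; auto. }
      destruct (IH I') as [b Hx]; [unfold ltof; eapply matches_len; eauto| auto|].
      exists b. eapply ex_f; eauto.
  - exists false. apply ex_none; auto.
Qed.

Lemma total F : Forall goodT F -> forall n,
  (forall q, qsize q <= n -> GQ q -> exists o, evalQ F q o) /\
  (forall c, csize c <= n -> GC c -> exists b, evalC F c b).
Proof.
  intros HF n. induction n as [|n [IHq IHc]].
  - split; intros x Hs; [pose proof (proj1 size_pos x)|pose proof (proj2 size_pos x)]; lia.
  - split.
    + intros q Hs HG; destruct q; simpl in Hs, HG.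
      * exists []; apply eq_empty.
      * exists [red t]; apply eq_fact.
      * destruct HG as [G1 G2].
        destruct (IHq q1) as [o1 H1]; [lia|auto|]. destruct (IHq q2) as [o2 H2]; [lia|auto|].
        exists (o2 ++ o1); apply eq_union; auto.
      * destruct HG as [G1 G2].
        destruct (IHc c) as [[|] H1]; [lia|auto| |].
        -- destruct (IHq q) as [o H2]; [lia|auto|]. exists o; apply eq_if_t; auto.
        -- exists []; apply eq_if_f; auto.
      * destruct HG as [G1 G2].
        assert (Hit : exists o, evalIt F P q F o); [apply iter_total; auto|destruct Hit as [o Ho]].
        -- intros sg I I' Hm. apply IHq.
           ++ rewrite (proj1 (size_subst sg)). lia.
           ++ apply (proj1 (G_subst (matches_nice Hm))); auto.
        -- exists o; apply eq_from; auto.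
    + intros c Hs HG; destruct c; simpl in Hs, HG.
      * exists false; apply ec_false.
      * destruct (classic (red b = ttrue)); [exists true; apply ec_bt|exists false; apply ec_bf]; auto.
      * destruct (IHc c) as [b H1]; [lia|auto|]. exists (negb b); apply ec_not; auto.
      * destruct HG as [G1 G2].
        destruct (IHc c1) as [[|] H1]; [lia|auto| |].
        -- exists true; apply ec_or_t; auto.
        -- destruct (IHc c2) as [b H2]; [lia|auto|]. exists b; apply ec_or_f; auto.
      * destruct HG as [G1 G2].
        assert (Hit : exists b, evalEx F P c F b); [apply ex_total; auto|destruct Hit as [b Hb]].
        -- intros sg I I' Hm. apply IHc.
           ++ rewrite (proj2 (size_subst sg)). lia.
           ++ apply (proj2 (G_subst (matches_nice Hm))); auto.
        -- exists b; apply ec_ex; auto.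
Qed.

Lemma totalC F c : Forall goodT F -> GC c -> exists b, evalC F c b.
Proof. intros HF HC. exact (proj2 (total HF (csize c)) c (le_n _) HC). Qed.
Lemma totalQ F q : Forall goodT F -> GQ q -> exists o, evalQ F q o.
Proof. intros HF HC. exact (proj1 (total HF (qsize q)) q (le_n _) HC). Qed.

Lemma key1 F P r : forall I o, evalIt F P r I o -> forall sg I', matches P I sg I' ->
  exists p1 p2, evalQ F (substQ sg r) p1 /\ evalIt F P r I' p2 /\ Permutation o (p2 ++ p1).
Proof.
  intros I. induction I as [I IH] using (induction_ltof1 _ (@length _)).
  intros o He sg I' Hm. inversion He; subst.
  - exfalso; apply H2; eauto.
  - destruct (match_cases H H0 H2 Hm) as [[-> HP]|[J [M0 [M1 [G0 G1]]]]].
    + exists o1, o2. split; auto. split; [eapply evalIt_perm; eauto| apply Permutation_refl].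
    + destruct (IH I'0) with (o := o2) (sg := sg) (I' := J) as [p1 [p2 [Q1 [E2 Pp]]]];
        [unfold ltof; eapply matches_len; eauto | auto | auto |].
      exists p1, (p2 ++ o1). split; auto. split.
      * eapply ei_step; eauto.
      * eapply Permutation_trans; [apply Permutation_app_tail; exact Pp|].
        rewrite <- !app_assoc. apply Permutation_app_head. apply Permutation_app_comm.
Qed.

Lemma key2 F P c : forall I b, evalEx F P c I b -> forall sg I', matches P I sg I' ->
  exists b0, evalC F (substC sg c) b0 /\ (b0 = true -> b = true) /\ (b0 = false -> evalEx F P c I' b).
Proof.
  intros I. induction I as [I IH] using (induction_ltof1 _ (@length _)).
  intros b He sg I' Hm. inversion He; subst.
  - exfalso; apply H3; eauto.
  - destruct (match_cases H H1 H3 Hm) as [[-> HP]|[J [M0 [M1 [G0 G1]]]]].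
    + exists true. split; auto. split; auto. discriminate.
    + destruct (@totalC F (substC sg c)) as [b0 Hb0]; auto.
      { apply (proj2 (G_subst (matches_nice Hm))); auto. }
      exists b0. split; auto. split; auto. intros ->. eapply ex_t; eauto.
  - destruct (match_cases H H1 H3 Hm) as [[-> HP]|[J [M0 [M1 [G0 G1]]]]].
    + exists false. split; auto. split; [discriminate|]. intros _. eapply evalEx_perm; eauto.
    + destruct (IH I'0) with (b := b) (sg := sg) (I' := J) as [b0 [C0 [T0 F0]]];
        [unfold ltof; eapply matches_len; eauto | auto | auto |].
      exists b0. split; auto. split; auto. intros E. eapply ex_f; eauto.
Qed.


Scheme evalQ_mind := Induction for evalQ Sort Prop
 with evalIt_mind := Induction for evalIt Sort Prop
 with evalC_mind := Induction for evalC Sort Prop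
 with evalEx_mind := Induction for evalEx Sort Prop.
Combined Scheme eval_mind from evalQ_mind, evalIt_mind, evalC_mind, evalEx_mind.

Lemma st1 (s1 s2 s3 : @state Sig) : step s1 s2 -> steps s2 s3 -> steps s1 s3.
Proof. intros H1 H2. eapply rt_trans; [apply rt_step; exact H1| exact H2]. Qed.

Lemma complete F :
 (forall q o, evalQ F q o -> forall a k, steps (Run F a (KQ q :: k)) (Run F (o ++ a) k)) /\
 (forall P r I o, evalIt F P r I o -> forall a k, steps (Run F a (KIter P r I :: k)) (Run F (o ++ a) k)) /\
 (forall c b, evalC F c b -> forall a k, steps (Run F a (KC c :: k)) (Run F a (KVal b :: k))) /\
 (forall P c I b, evalEx F P c I b -> forall a k, steps (Run F a (KEx P c I :: k)) (Run F a (KVal b :: k))).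
Proof.
  apply (eval_mind
    (fun q o _ => forall a k, steps (Run F a (KQ q :: k)) (Run F (o ++ a) k))
    (fun P r I o _ => forall a k, steps (Run F a (KIter P r I :: k)) (Run F (o ++ a) k))
    (fun c b _ => forall a k, steps (Run F a (KC c :: k)) (Run F a (KVal b :: k)))
    (fun P c I b _ => forall a k, steps (Run F a (KEx P c I :: k)) (Run F a (KVal b :: k))));
  intros; simpl.
  - apply rt_step; apply st_empty.
  - apply rt_step; apply st_fact.
  - eapply st1; [apply st_union|]. eapply rt_trans; [apply H|]. rewrite <- app_assoc. apply H0.
  - eapply st1; [apply st_if|]. eapply rt_trans; [apply H|]. eapply st1; [apply st_if_true|]. apply H0.
  - eapply st1; [apply st_if|]. eapply rt_trans; [apply H|]. apply rt_step; apply st_if_false.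
  - eapply st1; [apply st_from|]. apply H.
  - apply rt_step; apply st_iter_end; auto.
  - eapply st1; [eapply st_iter; eauto|]. eapply rt_trans; [apply H|]. rewrite <- app_assoc. apply H0.
  - apply rt_step; apply st_false.
  - apply rt_step; apply st_bool_true; auto.
  - apply rt_step; apply st_bool_false; auto.
  - eapply st1; [apply st_not|]. eapply rt_trans; [apply H|]. apply rt_step; apply st_not_val.
  - eapply st1; [apply st_or|]. eapply rt_trans; [apply H|]. apply rt_step; apply st_or_true.
  - eapply st1; [apply st_or|]. eapply rt_trans; [apply H|]. eapply st1; [apply st_or_false|]. apply H0.
  - eapply st1; [apply st_ex|]. apply H.
  - apply rt_step; apply st_ex_none; auto.
  - eapply st1; [eapply st_ex_try; eauto|]. eapply rt_trans; [apply H|]. apply rt_step; apply st_exw_true.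
  - eapply st1; [eapply st_ex_try; eauto|]. eapply rt_trans; [apply H|]. eapply st1; [apply st_exw_false|]. apply H0.
Qed.

Inductive evalS (F : @db Sig) : list (@frame Sig) -> @db Sig -> Prop :=
| es_nil : evalS F [] []
| es_q q k o1 o2 : evalQ F q o1 -> evalS F k o2 -> evalS F (KQ q :: k) (o2 ++ o1)
| es_it P r I k o1 o2 : evalIt F P r I o1 -> evalS F k o2 -> evalS F (KIter P r I :: k) (o2 ++ o1)
| es_c c b k o : evalC F c b -> evalK F b k o -> evalS F (KC c :: k) o
| es_ex P c I b k o : evalEx F P c I b -> evalK F b k o -> evalS F (KEx P c I :: k) o
| es_val b k o : evalK F b k o -> evalS F (KVal b :: k) o
with evalK (F : @db Sig) : bool -> list (@frame Sig) -> @db Sig -> Prop :=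
| ek_if_t q k o : evalS F (KQ q :: k) o -> evalK F true (KIf q :: k) o
| ek_if_f q k o : evalS F k o -> evalK F false (KIf q :: k) o
| ek_not b k o : evalK F (negb b) k o -> evalK F b (KNot :: k) o
| ek_or_t c k o : evalK F true k o -> evalK F true (KOr c :: k) o
| ek_or_f c k o : evalS F (KC c :: k) o -> evalK F false (KOr c :: k) o
| ek_exw_t P c I k o : evalK F true k o -> evalK F true (KExW P c I :: k) o
| ek_exw_f P c I k o : evalS F (KEx P c I :: k) o -> evalK F false (KExW P c I :: k) o.

Scheme evalS_mind := Induction for evalS Sort Prop
 with evalK_mind := Induction for evalK Sort Prop.
Combined Scheme evalSK_mind from evalS_mind, evalK_mind.

Lemma completeS F :
  (forall k o, evalS F k o -> forall a, steps (Run F a k) (Ans (o ++ a))) /\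
  (forall b k o, evalK F b k o -> forall a, steps (Run F a (KVal b :: k)) (Ans (o ++ a))).
Proof.
  destruct (complete F) as [CQ [CI [CC CE]]].
  apply (evalSK_mind
    (fun k o _ => forall a, steps (Run F a k) (Ans (o ++ a)))
    (fun b k o _ => forall a, steps (Run F a (KVal b :: k)) (Ans (o ++ a))));
  intros; simpl.
  - apply rt_step; apply st_done.
  - eapply rt_trans; [apply CQ; eauto|]. rewrite <- app_assoc. apply H.
  - eapply rt_trans; [apply CI; eauto|]. rewrite <- app_assoc. apply H.
  - eapply rt_trans; [apply CC; eauto|]. apply H.
  - eapply rt_trans; [apply CE; eauto|]. apply H.
  - apply H.
  - eapply st1; [apply st_if_true|]. apply H.
  - eapply st1; [apply st_if_false|]. apply H.
  - eapply st1; [apply st_not_val|]. apply H.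
  - eapply st1; [apply st_or_true|]. apply H.
  - eapply st1; [apply st_or_false|]. apply H.
  - eapply st1; [apply st_exw_true|]. apply H.
  - eapply st1; [apply st_exw_false|]. apply H.
Qed.

Definition Den (s : @state Sig) (z : @db Sig) : Prop :=
  match s with
  | Run F a k => exists o, evalS F k o /\ Permutation z (o ++ a)
  | Ans a => Permutation z a
  end.

Lemma preserve s s' z : step s s' -> Den s z -> Den s' z.
Proof.
  intros Hs; destruct Hs; simpl; intros [o [He Hp]]; inversion He; subst; clear He.
  -
    match goal with Hq : evalQ _ QEmpty _ |- _ => inversion Hq; subst end.
    eexists; split; eauto. rewrite app_nil_r in Hp; exact Hp.
  -
    match goal with Hq : evalQ _ (QFact _) _ |- _ => inversion Hq; subst end.
    eexists; split; eauto. rewrite <- app_assoc in Hp; exact Hp.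
  -
    match goal with Hq : evalQ _ (QUnion _ _) _ |- _ => inversion Hq; subst end.
    eexists; split; [apply es_q; [eassumption|apply es_q; eassumption]|].
    rewrite <- ?app_assoc in Hp; rewrite <- ?app_assoc; exact Hp.
  -
    match goal with Hq : evalQ _ (QIf _ _) _ |- _ => inversion Hq; subst end.
    + eexists; split; [eapply es_c; [eassumption| apply ek_if_t; apply es_q; eassumption]|]. exact Hp.
    + eexists; split; [eapply es_c; [eassumption| apply ek_if_f; eassumption]|].
      rewrite app_nil_r in Hp; exact Hp.
  -
    match goal with Hq : evalQ _ (QFrom _ _) _ |- _ => inversion Hq; subst end.
    eexists; split; [apply es_it; eassumption|]. exact Hp.
  -
    match goal with Hi : evalIt _ _ _ _ _ |- _ =>
      destruct (key1 Hi H) as [p1 [p2 [Q1 [E2 Pp]]]] end.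
    exists ((o2 ++ p2) ++ p1). split; [apply es_q; [exact Q1| apply es_it; eassumption]|].
    eapply Permutation_trans; [exact Hp|]. rewrite <- !app_assoc.
    apply Permutation_app_head. rewrite app_assoc. apply Permutation_app_tail. exact Pp.
  -
    match goal with Hi : evalIt _ _ _ _ _ |- _ => inversion Hi; subst end.
    + exists o2; split; [assumption|]. rewrite app_nil_r in Hp; exact Hp.
    + exfalso; apply H; eauto.
  -
    match goal with Hk : evalK _ _ _ _ |- _ => inversion Hk; subst end.
    eexists; split; eauto.
  - match goal with Hk : evalK _ _ _ _ |- _ => inversion Hk; subst end.
    eexists; split; eauto.
  -
    match goal with Hc : evalC _ CFalse _ |- _ => inversion Hc; subst end.
    eexists; split; [apply es_val; eassumption|exact Hp].
  - match goal with Hc : evalC _ (CBool _) _ |- _ => inversion Hc; subst end.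
    + eexists; split; [apply es_val; eassumption|exact Hp].
    + contradiction.
  - match goal with Hc : evalC _ (CBool _) _ |- _ => inversion Hc; subst end.
    + contradiction.
    + eexists; split; [apply es_val; eassumption|exact Hp].
  -
    match goal with Hc : evalC _ (CNot _) _ |- _ => inversion Hc; subst end.
    eexists; split; [eapply es_c; [eassumption| apply ek_not; eassumption]|exact Hp].
  - match goal with Hk : evalK _ _ (KNot :: _) _ |- _ => inversion Hk; subst end.
    eexists; split; [apply es_val; eassumption|exact Hp].
  -
    match goal with Hc : evalC _ (COr _ _) _ |- _ => inversion Hc; subst end.
    + eexists; split; [eapply es_c; [eassumption| apply ek_or_t; eassumption]|exact Hp].
    + eexists; split; [eapply es_c; [eassumption| apply ek_or_f; eapply es_c; eassumption]|exact Hp].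
  - match goal with Hk : evalK _ _ (KOr _ :: _) _ |- _ => inversion Hk; subst end.
    eexists; split; [apply es_val; eassumption|exact Hp].
  - match goal with Hk : evalK _ _ (KOr _ :: _) _ |- _ => inversion Hk; subst end.
    eexists; split; [eassumption|exact Hp].
  -
    match goal with Hc : evalC _ (CEx _ _) _ |- _ => inversion Hc; subst end.
    eexists; split; [eapply es_ex; eassumption|exact Hp].
  -
    match goal with Hx : evalEx _ _ _ _ _ |- _ =>
      destruct (key2 Hx H) as [b0 [C0 [T0 F0]]] end.
    destruct b0.
    + rewrite T0 in *; auto.
      eexists; split; [eapply es_c; [exact C0| apply ek_exw_t; eassumption]|exact Hp].
    + eexists; split; [eapply es_c; [exact C0| apply ek_exw_f; eapply es_ex; [apply F0; auto| eassumption]]|exact Hp].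
  - match goal with Hx : evalEx _ _ _ _ _ |- _ => inversion Hx; subst end.
    + eexists; split; [apply es_val; eassumption|exact Hp].
    + exfalso; apply H; eauto.
    + exfalso; apply H; eauto.
  - match goal with Hk : evalK _ _ (KExW _ _ _ :: _) _ |- _ => inversion Hk; subst end.
    eexists; split; [apply es_val; eassumption|exact Hp].
  - match goal with Hk : evalK _ _ (KExW _ _ _ :: _) _ |- _ => inversion Hk; subst end.
    eexists; split; [eassumption|exact Hp].
  - exact Hp.
Qed.


Lemma reach s s' z : steps s s' -> Den s z -> Den s' z.
Proof.
  intros H; induction H; auto. apply preserve; auto.
Qed.

Lemma den_complete s z : Den s z -> exists a, steps s (Ans a).
Proof.
  destruct s as [F a k|a]; simpl.
  - intros [o [He _]]. exists (o ++ a). apply (proj1 (completeS F)); auto.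
  - intros _. exists a. apply rt_refl.
Qed.

Lemma ans_nf (a : @db Sig) : normal_form (Ans a).
Proof. intros [t H]; inversion H. Qed.

Lemma goodP_of (P : @pattern Sig) : qpat_ok P -> det_pattern P -> goodP P.
Proof.
  intros [t0 Hin] [m [t [-> [Hf [Hr HU]]]]]. destruct Hin as [E|[]]. inversion E; subst.
  eexists; split; [reflexivity|]. intros t' [Hg [Hr' Hf']] s1 s2 E1 E2 x Hx. eapply HU; eauto.
Qed.

Lemma toG : (forall q : @query Sig, in_Lquery q -> deterministic q -> GQ q) /\
            (forall c : @cond Sig, in_Lcond c -> deterministic_cond c -> GC c).
Proof.
  apply qc_mind; simpl; intros; repeat match goal with H : _ /\ _ |- _ => destruct H end;
    repeat split; auto using goodP_of.
Qed.

Lemma den_init (Q : @query Sig) F : GQ Q -> Forall goodT F -> exists z, Den (Init Q F) z.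
Proof.
  intros HG HF. destruct (@totalQ F Q HF HG) as [o Ho]. exists o. simpl.
  exists ([] ++ o). split; [apply es_q; auto; apply es_nil|]. simpl. rewrite app_nil_r. apply Permutation_refl.
Qed.

End Dev.

Unset Implicit Arguments.

Theorem theorem4 (S : FactSetting) (Q : @query S) :
  in_Lquery Q -> deterministic Q ->
  (forall F : @db S, ground_db F -> confluent_from (Init Q F)) /\
  (forall F : @db S, ground_db F ->
     exists F' : @db S, steps_nf (Init Q F) (Ans F') /\
       forall F'' : @db S, steps_nf (Init Q F) (Ans F'') -> Permutation F' F'').
Proof.
  intros HL HD. assert (HG : GQ Q) by (apply (proj1 toG); auto).
  split.
  - intros F HF u v Hu Hv.
    destruct (@den_init S Q F HG HF) as [z Hz].
    pose proof (@reach S _ _ _ Hu Hz) as Du. pose proof (@reach S _ _ _ Hv Hz) as Dv.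
    destruct (@den_complete S _ _ Du) as [a1 H1]. destruct (@den_complete S _ _ Dv) as [a2 H2].
    pose proof (@reach S _ _ _ H1 Du) as E1. pose proof (@reach S _ _ _ H2 Dv) as E2. simpl in E1, E2.
    exists (Ans a1), (Ans a2). split; auto. split; auto. constructor.
    eapply Permutation_trans; [apply Permutation_sym; exact E1| exact E2].
  - intros F HF.
    destruct (@den_init S Q F HG HF) as [z Hz].
    destruct (@den_complete S _ _ Hz) as [a1 H1].
    pose proof (@reach S _ _ _ H1 Hz) as E1; simpl in E1.
    exists a1. split; [split; [exact H1| apply ans_nf]|].
    intros F'' [H2 _]. pose proof (@reach S _ _ _ H2 Hz) as E2; simpl in E2.
    eapply Permutation_trans; [apply Permutation_sym; exact E1| exact E2].
Qed.
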